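(* Let $\mathcal A,\mathcal B>0$, $\alpha,\beta\in(0,1)$, $h,\tau>0$. If $$\frac{\tau^{\alpha}(-\alpha^2+4\alpha-2)\mathcal A+\tau^{\beta}(-\beta^2+4\beta-2)\mathcal B}{h^2}\le\frac{279}{952},$$ then for every real $\theta$, with $s=\sin^2(\theta h/2)$, $$\widetilde{\mathcal P}=\Big[1-\tfrac{4}{35}s^3\Big]-4g_1^{(\alpha,\beta)}s\Big[1+\tfrac13 s+\tfrac{8}{45}s^2\Big]\ge0.$$
   Context: $\varpi_\ell^{(\sigma)}=(-1)^\ell\binom{\sigma}{\ell}$, $g_0^{(\sigma)}=\frac{1+\sigma}{2}\varpi_0^{(\sigma)}$, $g_\ell^{(\sigma)}=\frac{1+\sigma}{2}\varpi_\ell^{(\sigma)}+\frac{1-\sigma}{2}\varpi_{\ell-1}^{(\sigma)}$ ($\ell\ge1$); $\mu_\alpha=\tau^\alpha\mathcal A/h^2$, $\mu_\beta=\tau^\beta\mathcal B/h^2$, $g_\ell^{(\alpha,\beta)}=\mu_\alpha g_\ell^{(1-\alpha)}+\mu_\beta g_\ell^{(1-\beta)}$. *)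

(* Defs.v *)
From Stdlib Require Import Reals.
Open Scope R_scope.

Fixpoint gbinom (sigma : R) (l : nat) : R :=
  match l with
  | O => 1
  | S k => gbinom sigma k * (sigma - INR k) / INR (S k)
  end.

Definition varpi (sigma : R) (l : nat) : R := (-1) ^ l * gbinom sigma l.

Definition gcoef (sigma : R) (l : nat) : R :=
  match l with
  | O => (1 + sigma) / 2 * varpi sigma 0
  | S k => (1 + sigma) / 2 * varpi sigma l + (1 - sigma) / 2 * varpi sigma k
  end.

Definition mu (tau alpha A h : R) : R := Rpower tau alpha * A / h ^ 2.

Definition gab (A B alpha beta h tau : R) (l : nat) : R :=
  mu tau alpha A h * gcoef (1 - alpha) l + mu tau beta B h * gcoef (1 - beta) l.

(* Main.v *)
Require Import Defs.
From Stdlib Require Import Reals Lra Psatz.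
Open Scope R_scope.

Lemma gcoef1 (a : R) : gcoef (1 - a) 1 = (- a ^ 2 + 4 * a - 2) / 2.
Proof.
  unfold gcoef, varpi; simpl. rewrite ?Rmult_1_l. field.
Qed.

Theorem lemma9 (A B alpha beta h tau : R)
  (hA : 0 < A) (hB : 0 < B)
  (ha0 : 0 < alpha) (ha1 : alpha < 1) (hb0 : 0 < beta) (hb1 : beta < 1)
  (hh : 0 < h) (htau : 0 < tau)
  (hcond : (Rpower tau alpha * (- alpha ^ 2 + 4 * alpha - 2) * A
            + Rpower tau beta * (- beta ^ 2 + 4 * beta - 2) * B) / h ^ 2
           <= 279 / 952) :
  forall theta : R,
    let s := (sin (theta * h / 2)) ^ 2 in
    (1 - 4 / 35 * s ^ 3)
      - 4 * gab A B alpha beta h tau 1 * s * (1 + 1 / 3 * s + 8 / 45 * s ^ 2)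
    >= 0.
Proof.
  intros theta s.
  set (X := (Rpower tau alpha * (- alpha ^ 2 + 4 * alpha - 2) * A
            + Rpower tau beta * (- beta ^ 2 + 4 * beta - 2) * B) / h ^ 2) in *.
  assert (HG : gab A B alpha beta h tau 1 = X / 2).
  { unfold gab, mu, X. rewrite !gcoef1. field. lra. }
  rewrite HG.
  assert (Hs0 : 0 <= s) by (unfold s; apply pow2_ge_0).
  assert (Hs1 : s <= 1).
  { unfold s. pose proof (SIN_bound (theta * h / 2)). simpl. nra. }
  clearbody s X.
  assert (Hq : 0 <= s * (1 + 1 / 3 * s + 8 / 45 * s ^ 2)) by
    (apply Rmult_le_pos; [lra| nra]).
  assert (H1 : 4 * (X / 2) * s * (1 + 1 / 3 * s + 8 / 45 * s ^ 2)
     <= 4 * (279/952 / 2) * s * (1 + 1 / 3 * s + 8 / 45 * s ^ 2)).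
  { replace (4 * (X / 2) * s * (1 + 1 / 3 * s + 8 / 45 * s ^ 2)) with
      (2 * X * (s * (1 + 1 / 3 * s + 8 / 45 * s ^ 2))) by field.
    replace (4 * (279/952 / 2) * s * (1 + 1 / 3 * s + 8 / 45 * s ^ 2)) with
      (2 * (279/952) * (s * (1 + 1 / 3 * s + 8 / 45 * s ^ 2))) by field.
    apply Rmult_le_compat_r; lra. }
  assert (H2 : 0 <= (1 - 4 / 35 * s ^ 3)
      - 4 * (279/952 / 2) * s * (1 + 1 / 3 * s + 8 / 45 * s ^ 2)).
  { simpl. assert (0 <= s * s) by nra. assert (0 <= s*s*(1-s)) by nra.
    assert (0 <= s*(1-s)) by nra. nra. }
  lra.
Qed.
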